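(* Let $S$ be a finite nonempty set of positive integers and $s=\max S$. The minimum density of a $1$-identifying code in the distance graph $G(S)$ is achieved by a periodic set with period at most $(6s)2^{6s}$.
   Context: The distance graph $G(S)$ has vertex set $\mathbb{Z}$, with $i,j$ adjacent iff $|i-j|\in S$. For a vertex $u$, $B_r(u)$ is the set of vertices at graph distance at most $r$ from $u$ in $G(S)$. A set $A\subseteq\mathbb{Z}$ is an $r$-identifying code if for every pair of distinct vertices $u,v$, the sets $A\cap B_r(u)$ and $A\cap B_r(v)$ are nonempty and distinct. The density of $A$ is $\delta(A)=\limsup_{N\to\infty}\frac{|A\cap[-N,N]|}{2N+1}$. A set $A$ is periodic with period $p$ if $A+p=A$. *)

(* Defs.v *)
From Stdlib Require Import ZArith List Reals.
From Coquelicot Require Import Coquelicot.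
Import ListNotations.
Open Scope Z_scope.

Definition adj (S : list Z) (i j : Z) : Prop := In (Z.abs (i - j)) S.

Fixpoint within (S : list Z) (r : nat) (u v : Z) : Prop :=
  match r with
  | O => u = v
  | Datatypes.S r' => within S r' u v \/ exists w, within S r' u w /\ adj S w v
  end.

Definition ball (S : list Z) (r : nat) (u : Z) : Z -> Prop := fun v => within S r u v.

Definition identifying_code (S : list Z) (r : nat) (A : Z -> bool) : Prop :=
  forall u v : Z, u <> v ->
    (exists w, A w = true /\ ball S r u w) /\
    (exists w, A w = true /\ ball S r v w) /\
    ~ (forall w, (A w = true /\ ball S r u w) <-> (A w = true /\ ball S r v w)).

Definition count_in (A : Z -> bool) (N : nat) : nat :=
  length (filter A (map (fun k => Z.of_nat k - Z.of_nat N) (seq 0 (2 * N + 1)))).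

Definition density (A : Z -> bool) : Rbar :=
  LimSup_seq (fun N => (INR (count_in A N) / INR (2 * N + 1))%R).

Definition periodic (A : Z -> bool) (p : Z) : Prop :=
  forall z, A (z + p) = A z.

(* Main.v *)
Require Import Defs.
From Stdlib Require Import ZArith List Reals Arith Lia Lra Classical.
From Coquelicot Require Import Coquelicot.
Import ListNotations.
Open Scope Z_scope.
Open Scope Z_scope.

Lemma ball1_iff S u w : Defs.ball S 1%nat u w <-> (u - w = 0 \/ In (Z.abs (u - w)) S).
Proof.
  unfold Defs.ball; simpl; unfold adj. split.
  - intros [H|[w' [H1 H2]]]; [left; lia| subst; right; auto].
  - intros [H|H]; [left; lia| right; exists u; auto].
Qed.

Section Code.
Variable S : list Z.
Variable s : Z.
Hypothesis HSpos : forall x, In x S -> 0 < x.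
Hypothesis Hs_in : In s S.
Hypothesis Hs_max : forall x, In x S -> x <= s.

Lemma ball_close u w : Defs.ball S 1%nat u w -> -s <= w - u <= s.
Proof.
  rewrite ball1_iff. intros [H|H].
  - assert (0 < s) by (apply HSpos; auto). lia.
  - pose proof (Hs_max _ H). lia.
Qed.

Lemma ball_shift u w u' w' : u - w = u' - w' -> (Defs.ball S 1%nat u w <-> Defs.ball S 1%nat u' w').
Proof. intros H. rewrite !ball1_iff, H. tauto. Qed.

Lemma transfer (A B : Z -> bool) :
  identifying_code S 1%nat A ->
  (forall t, exists t', forall i, -3*s <= i <= 3*s -> B (t+i) = A (t'+i)) ->
  identifying_code S 1%nat B.
Proof.
  intros HA HW.
  assert (Hne : forall u, exists w, B w = true /\ Defs.ball S 1%nat u w).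
  { intros u. destruct (HW u) as [t' Ht].
    destruct (HA t' (t'+1)) as [[w [Hw1 Hw2]] _]; [lia|].
    pose proof (ball_close _ _ Hw2).
    exists (u + (w - t')). split.
    - rewrite Ht by lia. replace (t' + (w - t')) with w by lia. auto.
    - rewrite (ball_shift u _ t' w) by lia. auto. }
  intros u v Huv. split; [auto|split; [auto|]].
  destruct (Z_le_gt_dec (Z.abs (u - v)) (2*s)) as [Hc|Hc].
  - destruct (HW u) as [t' Ht].
    destruct (HA t' (t' + (v - u))) as [_ [_ H3]]; [lia|].
    intros Hall. apply H3. intros w.
    destruct (classic (Defs.ball S 1%nat t' w \/ Defs.ball S 1%nat (t' + (v-u)) w)) as [Hb|Hb].
    + assert (Hr : -3*s <= w - t' <= 3*s).
      { destruct Hb as [Hb|Hb]; apply ball_close in Hb; lia. }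
      specialize (Hall (u + (w - t'))).
      rewrite Ht in Hall by lia. replace (t' + (w - t')) with w in Hall by lia.
      rewrite (ball_shift u _ t' w) in Hall by lia.
      rewrite (ball_shift v _ (t' + (v-u)) w) in Hall by lia. exact Hall.
    + split; intros [_ Hw]; exfalso; apply Hb; auto.
  - intros Hall. destruct (Hne u) as [w [Hw1 Hw2]].
    assert (Hv : Defs.ball S 1%nat v w) by (apply (Hall w); auto).
    apply ball_close in Hw2. apply ball_close in Hv. lia.
Qed.

Lemma all_true_code : identifying_code S 1%nat (fun _ => true).
Proof.
  intros u v Huv. split; [exists u; split; [auto|apply ball1_iff; left; lia]|].
  split; [exists v; split; [auto|apply ball1_iff; left; lia]|].
  intros Hall.
  assert (H1 : Defs.ball S 1%nat v (u + s)).
  { apply (Hall (u+s)). split; auto. apply ball1_iff. right.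
    replace (Z.abs (u - (u+s))) with s; auto. assert (0<s) by auto. lia. }
  assert (H2 : Defs.ball S 1%nat u (v + s)).
  { apply (Hall (v+s)). split; auto. apply ball1_iff. right.
    replace (Z.abs (v - (v+s))) with s; auto. assert (0<s) by auto. lia. }
  apply ball_close in H1. apply ball_close in H2. lia.
Qed.

End Code.
Open Scope Z_scope.

Fixpoint cnt (A : Z -> bool) (a : Z) (n : nat) : nat :=
  match n with
  | O => O
  | S n' => ((if A a then 1 else 0) + cnt A (a+1) n')%nat
  end.

Lemma cnt_add A n m : forall a, cnt A a (n + m) = (cnt A a n + cnt A (a + Z.of_nat n) m)%nat.
Proof.
  induction n; intros a; simpl.
  - f_equal. f_equal. lia.
  - rewrite IHn. replace (a + 1 + Z.of_nat n) with (a + Z.pos (Pos.of_succ_nat n)) by lia. lia.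
Qed.

Lemma cnt_le A n : forall a, (cnt A a n <= n)%nat.
Proof. induction n; intros a; simpl; [lia|]. specialize (IHn (a+1)). destruct (A a); lia. Qed.

Lemma cnt_ext A B n : forall a b, (forall k, 0 <= k < Z.of_nat n -> A (a+k) = B (b+k)) ->
  cnt A a n = cnt B b n.
Proof.
  induction n; intros a b H; simpl; auto.
  rewrite (IHn (a+1) (b+1)).
  - specialize (H 0). rewrite !Z.add_0_r in H. rewrite H by lia. auto.
  - intros k Hk. replace (a+1+k) with (a+(k+1)) by lia. replace (b+1+k) with (b+(k+1)) by lia. apply H. lia.
Qed.

Lemma cnt_mono A n m a : (n <= m)%nat -> (cnt A a n <= cnt A a m)%nat.
Proof. intros H. replace m with (n + (m - n))%nat by lia. rewrite cnt_add. lia. Qed.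

Lemma count_filter A c n : forall m : nat,
  length (filter A (map (fun k => Z.of_nat k - c) (seq m n))) = cnt A (Z.of_nat m - c) n.
Proof.
  induction n; intros m; simpl; auto.
  replace (Z.of_nat m - c + 1) with (Z.of_nat (S m) - c) by lia.
  destruct (A (Z.of_nat m - c)); [cbn [length]|]; rewrite IHn; reflexivity.
Qed.

Section Per.
Variable P : Z -> bool.
Variable p : nat.
Hypothesis Hp : (0 < p)%nat.
Hypothesis HP : forall z, P (z + Z.of_nat p) = P z.

Lemma cnt_shift1 a : cnt P (a+1) p = cnt P a p.
Proof.
  assert (H1 := cnt_add P 1 p a). assert (H2 := cnt_add P p 1 a).
  replace (1 + p)%nat with (p + 1)%nat in H1 by lia. rewrite H1 in H2.
  simpl in H2. rewrite HP in H2. replace (a + Z.of_nat 1) with (a+1) in H2 by lia. lia.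
Qed.

Lemma cnt_per a : cnt P a p = cnt P 0 p.
Proof.
  induction a using Z.peano_ind; auto.
  - rewrite <- Z.add_1_r, cnt_shift1; auto.
  - rewrite <- IHa. rewrite <- (cnt_shift1 (Z.pred a)). f_equal. lia.
Qed.

Lemma cnt_mult k : forall a, cnt P a (k * p) = (k * cnt P 0 p)%nat.
Proof.
  induction k; intros a; simpl; auto.
  rewrite cnt_add, IHk, cnt_per. lia.
Qed.

Lemma cnt_upper a n : (p * cnt P a n <= cnt P 0 p * n + cnt P 0 p * p)%nat.
Proof.
  assert (Hn : (n <= (n / p + 1) * p)%nat).
  { pose proof (Nat.div_mod n p ltac:(lia)). pose proof (Nat.mod_upper_bound n p ltac:(lia)). nia. }
  pose proof (cnt_mono P _ _ a Hn). rewrite cnt_mult in H.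
  pose proof (Nat.mul_div_le n p ltac:(lia)). nia.
Qed.
End Per.

Fixpoint words (k : nat) : list (list bool) :=
  match k with
  | O => [[]]
  | S k' => map (cons true) (words k') ++ map (cons false) (words k')
  end.

Lemma words_len k : length (words k) = (2 ^ k)%nat.
Proof. induction k; simpl; auto. rewrite length_app, !length_map. lia. Qed.

Lemma words_in k : forall l, length l = k -> In l (words k).
Proof.
  induction k; intros l H; destruct l; simpl in *; try lia; auto.
  apply in_or_app. destruct b; [left|right]; apply in_map; apply IHk; lia.
Qed.

Lemma map_seq_eq {T} (g h : nat -> T) K : map g (seq 0 K) = map h (seq 0 K) -> forall i, (i < K)%nat -> g i = h i.
Proof.
  induction K; intros H i Hi; [lia|].
  rewrite seq_S, !map_app in H. simpl in H. apply app_inj_tail in H. destruct H.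
  destruct (Nat.eq_dec i K); [subst; auto|]. apply IHK; auto; lia.
Qed.

Definition st (A : Z -> bool) (K : nat) (x : Z) := map (fun i => A (x + Z.of_nat i)) (seq 0 K).

Lemma pigeon (A : Z -> bool) (K : nat) (a : Z) :
  exists i j, (i < j <= 2 ^ K)%nat /\
    forall k, (k < K)%nat -> A (a + Z.of_nat i + Z.of_nat k) = A (a + Z.of_nat j + Z.of_nat k).
Proof.
  set (f := fun j : nat => st A K (a + Z.of_nat j)).
  set (l := map f (seq 0 (S (2^K)))).
  assert (Hnd : ~ NoDup l).
  { intros Hnd. assert (Hi : incl l (words K)).
    { intros w Hw. unfold l in Hw. apply in_map_iff in Hw. destruct Hw as [j [<- _]].
      apply words_in. unfold f, st. rewrite length_map, length_seq. auto. }
    pose proof (NoDup_incl_length Hnd Hi). unfold l in H.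
    rewrite length_map, length_seq, words_len in H. lia. }
  rewrite (NoDup_nth l (f 0%nat)) in Hnd.
  apply not_all_ex_not in Hnd. destruct Hnd as [i Hnd].
  apply not_all_ex_not in Hnd. destruct Hnd as [j Hnd].
  unfold l in Hnd. rewrite length_map, length_seq in Hnd.
  assert (Hi : (i < S (2^K))%nat /\ (j < S (2^K))%nat /\ f i = f j /\ i <> j).
  { apply NNPP. intros C. apply Hnd. intros H1 H2 H3.
    rewrite !map_nth, !seq_nth in H3 by auto. simpl in H3.
    apply NNPP. intros C2. apply C. auto. }
  destruct Hi as [H1 [H2 [H3 H4]]].
  unfold f, st in H3.
  assert (Hk : forall k, (k < K)%nat -> A (a + Z.of_nat i + Z.of_nat k) = A (a + Z.of_nat j + Z.of_nat k)).
  { apply (map_seq_eq (fun k => A (a + Z.of_nat i + Z.of_nat k)) (fun k => A (a + Z.of_nat j + Z.of_nat k))). auto. }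
  destruct (Nat.lt_gt_cases i j) as [[Hl|Hl] _]; [lia| |].
  - exists i, j. split; [lia|auto].
  - exists j, i. split; [lia|]. intros k Hk'. symmetry. auto.
Qed.

Lemma divide_fact q n : (1 <= q <= n)%nat -> Nat.divide q (fact n).
Proof.
  induction n; intros H; [lia|]. simpl fact.
  destruct (Nat.eq_dec q (S n)).
  - subst. exists (fact n). lia.
  - destruct (IHn ltac:(lia)) as [c Hc]. exists (c + n * c)%nat. rewrite Hc. lia.
Qed.

Lemma least_nat (P : nat -> Prop) : (exists m, P m) -> exists m, P m /\ forall k, P k -> (m <= k)%nat.
Proof.
  intros [m Hm]. revert Hm. induction m as [m IH] using lt_wf_ind. intros Hm.
  destruct (classic (exists k, P k /\ (k < m)%nat)) as [[k [Hk1 Hk2]]|Hn].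
  - apply (IH k); auto.
  - exists m. split; auto. intros k Hk. apply NNPP. intros C. apply Hn. exists k. split; auto; lia.
Qed.
Open Scope Z_scope.

Section Main.
Variable S : list Z.
Variable s : Z.
Hypothesis HSpos : forall x, In x S -> 0 < x.
Hypothesis Hs_in : In s S.
Hypothesis Hs_max : forall x, In x S -> x <= s.

Lemma s_pos : 0 < s.
Proof. apply HSpos; auto. Qed.

Definition splice (A : Z -> bool) (x p : Z) := fun z => if z <? x then A z else A (z + p).
Definition perext (A : Z -> bool) (x p : Z) := fun z => A (x + z mod p).

Lemma splice_code (A : Z -> bool) x p : 0 < p -> identifying_code S 1%nat A ->
  (forall k, 0 <= k < 6*s -> A (x+k) = A (x+p+k)) ->
  identifying_code S 1%nat (splice A x p).
Proof.
  intros Hp HA Hw. apply (transfer S s HSpos Hs_in Hs_max A); auto.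
  intros t. unfold splice. destruct (Z_lt_le_dec (t - 3*s) x) as [Hl|Hl].
  - exists t. intros i Hi. destruct (Z.ltb_spec (t+i) x); auto.
    replace (t+i) with (x + (t+i-x)) by lia. rewrite Hw by lia. f_equal. lia.
  - exists (t+p). intros i Hi. destruct (Z.ltb_spec (t+i) x); [lia|]. f_equal; lia.
Qed.

Lemma per_key (A : Z -> bool) x p : 0 < p -> (forall k, 0 <= k < 6*s -> A (x+k) = A (x+p+k)) ->
  forall k, 0 <= k < p + 6*s -> A (x + k mod p) = A (x + k).
Proof.
  intros Hp Hw.
  assert (forall n : nat, forall k, 0 <= k < Z.of_nat n -> k < p + 6*s -> A (x + k mod p) = A (x + k)).
  { induction n; intros k Hk Hk2; [lia|].
    destruct (Z_lt_le_dec k p).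
    - rewrite Z.mod_small by lia. auto.
    - replace k with ((k - p) + 1 * p) at 1 by lia. rewrite Z_mod_plus_full.
      rewrite IHn by lia. replace (x+k) with (x + p + (k-p)) by lia. rewrite <- Hw by lia. auto. }
  intros k Hk. apply (H (Z.to_nat k + 1)%nat); lia.
Qed.

Lemma perext_code (A : Z -> bool) x p : 0 < p -> identifying_code S 1%nat A ->
  (forall k, 0 <= k < 6*s -> A (x+k) = A (x+p+k)) ->
  identifying_code S 1%nat (perext A x p).
Proof.
  intros Hp HA Hw. apply (transfer S s HSpos Hs_in Hs_max A); auto.
  intros t. unfold perext. exists (x + (t - 3*s) mod p + 3*s). intros i Hi.
  pose proof (Z.mod_pos_bound (t - 3*s) p Hp).
  replace (t + i) with ((t - 3*s) + (i + 3*s)) by lia.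
  rewrite <- Z.add_mod_idemp_l by lia.
  rewrite (per_key A x p) by (auto; lia). f_equal. lia.
Qed.

Lemma perext_periodic (A : Z -> bool) x p : 0 < p -> forall z, perext A x p (z + p) = perext A x p z.
Proof. intros Hp z. unfold perext. replace (z + p) with (z + 1 * p) by lia. rewrite Z_mod_plus_full. auto. Qed.

Definition K := Z.to_nat (6*s).
Definition V := (2 ^ K)%nat.

Lemma main_ineq (c0 p0 : nat) (Hp0 : (0 < p0)%nat) (Hc0 : (c0 <= p0)%nat)
  (Hmin : forall (Q : Z -> bool) (q : nat), identifying_code S 1%nat Q -> (0 < q <= V)%nat ->
      (forall z, Q (z + Z.of_nat q) = Q z) -> (c0 * q <= cnt Q 0 q * p0)%nat) :
  forall n (A : Z -> bool) a, identifying_code S 1%nat A -> (c0 * n <= p0 * cnt A a n + p0 * V)%nat.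
Proof.
  intros n. induction n as [n IH] using lt_wf_ind. intros A a HA.
  destruct (le_lt_dec n V) as [Hn|Hn]; [nia|].
  destruct (pigeon A K a) as [i [j [Hij Hw]]]. fold V in Hij.
  set (pp := (j - i)%nat). set (x := a + Z.of_nat i).
  assert (Hs : 0 < s) by apply s_pos.
  assert (Hw' : forall k, 0 <= k < 6*s -> A (x+k) = A (x + Z.of_nat pp + k)).
  { intros k Hk. replace k with (Z.of_nat (Z.to_nat k)) by lia. unfold x.
    rewrite Hw by (unfold K; lia). f_equal. unfold pp. lia. }
  assert (Hpp : 0 < Z.of_nat pp) by (unfold pp; lia).
  pose proof (Hmin (perext A x (Z.of_nat pp)) pp (perext_code A x _ Hpp HA Hw') ltac:(unfold pp; lia)
      (perext_periodic A x _ Hpp)) as H1.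
  assert (E1 : cnt (perext A x (Z.of_nat pp)) 0 pp = cnt A x pp).
  { apply cnt_ext. intros k Hk. unfold perext. rewrite Z.mod_small by lia. f_equal; lia. }
  rewrite E1 in H1.
  pose proof (IH (n - pp)%nat ltac:(unfold pp; lia) (splice A x (Z.of_nat pp)) a
      (splice_code A x _ Hpp HA Hw')) as H2.
  assert (E2 : cnt A a n = (cnt A a i + cnt A x pp + cnt A (x + Z.of_nat pp) (n - j))%nat).
  { replace n with (i + (pp + (n - j)))%nat at 1 by (unfold pp; lia).
    rewrite !cnt_add. unfold x. replace (a + Z.of_nat i + Z.of_nat pp) with (a + Z.of_nat i + Z.of_nat pp) by lia. lia. }
  assert (E3 : cnt (splice A x (Z.of_nat pp)) a (n - pp) = (cnt A a i + cnt A (x + Z.of_nat pp) (n - j))%nat).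
  { replace (n - pp)%nat with (i + (n - j))%nat by (unfold pp; lia).
    rewrite cnt_add. f_equal.
    - apply cnt_ext. intros k Hk. unfold splice. destruct (Z.ltb_spec (a+k) x); [auto|unfold x in *; lia].
    - apply cnt_ext. intros k Hk. unfold splice. fold x.
      destruct (Z.ltb_spec (x+k) x); [lia|]. f_equal; lia. }
  rewrite E3 in H2. rewrite E2.
  replace (c0 * n)%nat with (c0 * (n - pp) + c0 * pp)%nat by (unfold pp; nia).
  nia.
Qed.

End Main.
Open Scope R_scope.

Lemma L1 c p k n m Vr : 0 < p -> 0 < m -> m <= n -> 0 <= Vr -> 0 <= k ->
  c * n <= p * k + p * Vr -> c / p - Vr / m <= k / n.
Proof.
  intros Hp Hm Hmn HV Hk H.
  assert (Hn : 0 < n) by lra.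
  set (a := / p). set (b := / n). set (e := / m).
  assert (Ha : p * a = 1) by (unfold a; field; lra).
  assert (Hb : n * b = 1) by (unfold b; field; lra).
  assert (Ha0 : 0 < a) by (unfold a; apply Rinv_0_lt_compat; lra).
  assert (Hb0 : 0 < b) by (unfold b; apply Rinv_0_lt_compat; lra).
  assert (Hbe : b <= e) by (unfold b, e; apply Rinv_le_contravar; lra).
  unfold Rdiv. fold a b e.
  assert (H2 : c * n * (a * b) <= (p * k + p * Vr) * (a * b)) by (apply Rmult_le_compat_r; nra).
  assert (E1 : c * n * (a * b) = c * a * (n * b)) by ring.
  assert (E2 : (p * k + p * Vr) * (a * b) = (k * b + Vr * b) * (p * a)) by ring.
  rewrite Hb in E1. rewrite Ha in E2. nra.
Qed.

Lemma L2 c p k n m : 0 < p -> 0 < m -> m <= n -> 0 <= c ->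
  p * k <= c * n + c * p -> k / n <= c / p + c / m.
Proof.
  intros Hp Hm Hmn Hc H.
  assert (Hn : 0 < n) by lra.
  set (a := / p). set (b := / n). set (e := / m).
  assert (Ha : p * a = 1) by (unfold a; field; lra).
  assert (Hb : n * b = 1) by (unfold b; field; lra).
  assert (Ha0 : 0 < a) by (unfold a; apply Rinv_0_lt_compat; lra).
  assert (Hb0 : 0 < b) by (unfold b; apply Rinv_0_lt_compat; lra).
  assert (Hbe : b <= e) by (unfold b, e; apply Rinv_le_contravar; lra).
  unfold Rdiv. fold a b e.
  assert (H2 : p * k * (a * b) <= (c * n + c * p) * (a * b)) by (apply Rmult_le_compat_r; nra).
  assert (E1 : p * k * (a * b) = k * b * (p * a)) by ring.
  assert (E2 : (c * n + c * p) * (a * b) = c * a * (n * b) + c * b * (p * a)) by ring.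
  rewrite Ha in E1. rewrite Hb, Ha in E2. nra.
Qed.

Lemma lim_aux (mu C : R) (sg : R) : is_lim_seq (fun N => mu + sg * (C * / INR (S N))) mu.
Proof.
  assert (H : is_lim_seq (fun N => / INR (S N)) 0).
  { assert (H0 : is_lim_seq (fun N => INR (S N)) p_infty).
    { apply (is_lim_seq_incr_1 INR p_infty). apply is_lim_seq_INR. }
    apply (is_lim_seq_inv _ _ H0). discriminate. }
  apply (is_lim_seq_scal_l _ C) in H. apply (is_lim_seq_scal_l _ sg) in H.
  pose proof (is_lim_seq_plus' _ _ mu _ (is_lim_seq_const mu) H) as H2.
  simpl in H2. replace (mu + sg * (C * 0)) with mu in H2 by ring. exact H2.
Qed.

Lemma count_in_cnt A N : count_in A N = cnt A (- Z.of_nat N) (2 * N + 1).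
Proof. unfold count_in. rewrite count_filter. f_equal. Qed.

Close Scope R_scope.
Close Scope Z_scope.

Lemma lower_bound S s (HSpos : forall x, In x S -> (0 < x)%Z) (Hs_in : In s S)
  (Hs_max : forall x, In x S -> (x <= s)%Z) (c0 p0 : nat) (Hp0 : (0 < p0)%nat) (Hc0 : (c0 <= p0)%nat)
  (Hmin : forall (Q : Z -> bool) (q : nat), identifying_code S 1%nat Q -> (0 < q <= V s)%nat ->
      (forall z, Q (z + Z.of_nat q)%Z = Q z) -> (c0 * q <= cnt Q 0 q * p0)%nat)
  (B : Z -> bool) (HB : identifying_code S 1%nat B) (N : nat) :
  (INR c0 / INR p0 + -1 * (INR (V s) * / INR (Datatypes.S N)) <= INR (count_in B N) / INR (2 * N + 1))%R.
Proof.
  pose proof (main_ineq S s HSpos Hs_in Hs_max c0 p0 Hp0 Hc0 Hmin (2*N+1) B (- Z.of_nat N)%Z HB) as H.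
  rewrite count_in_cnt.
  apply le_INR in H. rewrite !plus_INR, !mult_INR in H.
  assert (Hl := L1 (INR c0) (INR p0) (INR (cnt B (- Z.of_nat N) (2 * N + 1))) (INR (2*N+1)) (INR (Datatypes.S N)) (INR (V s))).
  replace (INR c0 / INR p0 + -1 * (INR (V s) * / INR (Datatypes.S N)))%R
    with (INR c0 / INR p0 - INR (V s) / INR (Datatypes.S N))%R by (unfold Rdiv; ring).
  apply Hl; try apply pos_INR.
  - apply lt_0_INR; lia.
  - apply lt_0_INR; lia.
  - apply le_INR; lia.
  - rewrite !plus_INR, !mult_INR in *. lra.
Qed.

Theorem theorem5 (S : list Z) (s : Z)
  (HSne : S <> nil)
  (HSpos : forall x, In x S -> (0 < x)%Z)
  (Hs_in : In s S) (Hs_max : forall x, In x S -> (x <= s)%Z) :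
  exists (A : Z -> bool) (p : Z),
    (0 < p)%Z /\ (p <= (6 * s) * 2 ^ (6 * s))%Z /\ periodic A p /\
    identifying_code S 1 A /\
    forall B : Z -> bool, identifying_code S 1 B -> Rbar_le (density A) (density B).
Proof.
  assert (Hs : (0 < s)%Z) by (apply HSpos; auto).
  assert (HV : (1 <= V s)%nat) by (unfold V; pose proof (Nat.pow_le_mono_r 2 0 (K s) ltac:(lia) ltac:(lia)); simpl in *; lia).
  set (F := fact (V s)).
  assert (HF : (0 < F)%nat) by (apply lt_O_fact).
  destruct (least_nat (fun m => exists (Q : Z -> bool) (q : nat), identifying_code S 1%nat Q /\ (0 < q <= V s)%nat /\
      (forall z, Q (z + Z.of_nat q)%Z = Q z) /\ (cnt Q 0 q * F = m * q)%nat)) as [m [[Q0 [q0 [HQ0 [Hq0 [HP0 HF0]]]]] Hm]].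
  { exists F, (fun _ => true), 1%nat. split; [apply (all_true_code S s HSpos Hs_in Hs_max)|].
    split; [lia|]. split; [auto|]. simpl. lia. }
  set (c0 := cnt Q0 0 q0).
  assert (Hc0 : (c0 <= q0)%nat) by apply cnt_le.
  assert (Hmin : forall (Q : Z -> bool) (q : nat), identifying_code S 1%nat Q -> (0 < q <= V s)%nat ->
      (forall z, Q (z + Z.of_nat q)%Z = Q z) -> (c0 * q <= cnt Q 0 q * q0)%nat).
  { intros Q q HQ Hq HP. destruct (divide_fact q (V s) ltac:(lia)) as [d Hd].
    fold F in Hd.
    assert (Hmm : (m <= cnt Q 0 q * d)%nat).
    { apply Hm. exists Q, q. split; [auto|]. split; [lia|]. split; [auto|]. rewrite Hd. lia. }
    assert (H1 : (c0 * q * F <= cnt Q 0 q * q0 * F)%nat).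
    { unfold c0. rewrite <- Nat.mul_assoc, (Nat.mul_comm q F), Nat.mul_assoc, HF0.
      rewrite <- (Nat.mul_assoc (cnt Q 0 q)), (Nat.mul_comm q0 F), Nat.mul_assoc, Hd. replace (cnt Q 0 q * (d * q) * q0)%nat with (cnt Q 0 q * d * (q0 * q))%nat by ring. rewrite <- Nat.mul_assoc. apply Nat.mul_le_mono_r; auto. }
    apply (Nat.mul_le_mono_pos_r _ _ F); auto. }
  exists Q0, (Z.of_nat q0). split; [lia|]. split.
  { assert (E : Z.of_nat (V s) = (2 ^ (6 * s))%Z).
    { unfold V, K. rewrite Nat2Z.inj_pow. f_equal. lia. }
    assert (0 < 2 ^ (6*s))%Z by (apply Z.pow_pos_nonneg; lia). nia. }
  split; [exact HP0|]. split; [exact HQ0|].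
  intros B HB.
  set (mu := (INR c0 / INR q0)%R).
  assert (Hlow := lower_bound S s HSpos Hs_in Hs_max c0 q0 ltac:(lia) Hc0 Hmin).
  assert (Hup : forall N, (INR (count_in Q0 N) / INR (2 * N + 1) <= mu + 1 * (INR c0 * / INR (Datatypes.S N)))%R).
  { intros N. rewrite count_in_cnt.
    pose proof (cnt_upper Q0 q0 ltac:(lia) HP0 (- Z.of_nat N)%Z (2*N+1)) as H. fold c0 in H.
    apply le_INR in H. rewrite !plus_INR, !mult_INR in H.
    replace (mu + 1 * (INR c0 * / INR (Datatypes.S N)))%R with (INR c0 / INR q0 + INR c0 / INR (Datatypes.S N))%R by (unfold mu, Rdiv; ring).
    apply L2.
    - apply lt_0_INR; lia.
    - apply lt_0_INR; lia.
    - apply le_INR; lia.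
    - apply pos_INR.
    - rewrite !plus_INR, !mult_INR in *. lra. }
  assert (Hd0 : density Q0 = Finite mu).
  { unfold density. apply is_LimSup_seq_unique, is_lim_LimSup_seq.
    apply (is_lim_seq_le_le _ _ _ mu (fun n => conj (Hlow Q0 HQ0 n) (Hup n)) (lim_aux mu (INR (V s)) (-1)) (lim_aux mu (INR c0) 1)). }
  rewrite Hd0. unfold density.
  rewrite <- (is_LimSup_seq_unique _ _ (is_lim_LimSup_seq _ _ (lim_aux mu (INR (V s)) (-1)))).
  apply LimSup_le. exists 0%nat. intros n _. apply Hlow; auto.
Qed.
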